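(* (a) Let $k\ge 4$ be even and let $C_k=v_1v_2\cdots v_kv_1$. For every homomorphism $g$ from $\bar C_k$ to $\bar C_k$ that is not surjective on vertices, there are two distinct vertices $x\ne y$ with $g(x)=g(y)\in\{v_1,v_k\}$. (b) Let $k\ge 4$ and $P_k=v_1v_2\cdots v_k$. For every homomorphism $g$ from $\bar P_k$ to $\bar P_k$ that is not surjective on vertices, there are two distinct vertices $x\ne y$ with $g(x)=g(y)\in\{v_1,v_k\}$.
   Context: $\bar F$ denotes the complement of $F$. A homomorphism $F\to F'$ is a map $V(F)\to V(F')$ sending edges to edges. *)

(* Defs.v *)
From mathcomp Require Import all_boot.
Set Implicit Arguments. Unset Strict Implicit. Unset Printing Implicit Defensive.

(* Vertex v_i (1 <= i <= k) is represented by the ordinal i-1 : 'I_k. *)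

Definition cycle_adj (k : nat) : rel 'I_k :=
  fun i j => ((i.+1 %% k) == j) || ((j.+1 %% k) == i).

Definition path_adj (k : nat) : rel 'I_k :=
  fun i j => (i.+1 == j) || (j.+1 == i).

Definition compl_graph (T : finType) (e : rel T) : rel T :=
  fun x y => (x != y) && ~~ e x y.

Definition is_hom (T T' : finType) (e : rel T) (e' : rel T') (f : T -> T') : Prop :=
  forall x y, e x y -> e' (f x) (f y).

Definition vsurj (T T' : finType) (f : T -> T') : Prop :=
  forall w : T', exists x, f x = w.

(* Main.v *)
Require Import Defs.
From mathcomp Require Import all_boot zify.
From Stdlib Require Import Classical.

Section Core.
Variable n : nat.
Variable e : rel 'I_n.+1.
Hypothesis esym : forall x y, e x y = e y x.
Hypothesis etri : forall x y z, x != y -> y != z -> x != z -> e x y -> e y z -> e x z -> False.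
Hypothesis eadj : forall a b : 'I_n.+1, (nat_of_ord b = nat_of_ord a + 1 \/ nat_of_ord a = nat_of_ord b + 1) -> e a b.
Variable g : 'I_n.+1 -> 'I_n.+1.
Hypothesis hom : is_hom (compl_graph e) (compl_graph e) g.

Definition fib v := [set x | g x == v].

Lemma nearg x y : x != y -> g x = g y \/ e (g x) (g y) -> e x y.
Proof.
move=> nxy H; have := hom x y; rewrite /compl_graph nxy /=.
case Exy: (e x y) => //= /(_ isT) /andP [H1 H2].
case: H => [E|E]; first by rewrite E eqxx in H1.
by rewrite E in H2.
Qed.

Lemma fib_le2 v : #|fib v| <= 2.
Proof.
rewrite leqNgt; apply/negP => /card_gt2P [x [y [z [[hx hy hz] [nxy nyz nzx]]]]].
move: hx hy hz; rewrite !inE => /eqP hx /eqP hy /eqP hz.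
have nxz : x != z by rewrite eq_sym.
apply: (@etri x y z nxy nyz nxz).
- by apply: nearg => //; left; rewrite hx hy.
- by apply: nearg => //; left; rewrite hy hz.
- by apply: nearg => //; left; rewrite hx hz.
Qed.

Lemma fib_nbr a b : #|fib a| = 2 -> e a b -> a != b -> #|fib b| = 0.
Proof.
move=> H2 eab nab; have : 1 < #|fib a| by rewrite H2.
case/card_gt1P => x [y [hx hy nxy]]; move: hx hy; rewrite !inE => /eqP hx /eqP hy.
apply: eq_card0 => z; rewrite !inE; apply/negP => /eqP hz.
have nzx : z != x by apply: contraNneq nab => E; rewrite -hx -hz E.
have nzy : z != y by apply: contraNneq nab => E; rewrite -hy -hz E.
apply: (@etri z x y nzx nxy nzy).
- by apply: nearg => //; right; rewrite hz hx esym.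
- by apply: nearg => //; left; rewrite hx hy.
- by apply: nearg => //; right; rewrite hz hy esym.
Qed.

Lemma sum_fib : \sum_v #|fib v| = n.+1.
Proof.
transitivity (\sum_v \sum_x (g x == v : nat)).
  apply: eq_bigr => v _; rewrite -sum1_card big_mkcond /=.
  by apply: eq_bigr => x _; rewrite inE; case: (g x == v).
rewrite exchange_big /=.
transitivity (\sum_(x : 'I_n.+1) 1); last by rewrite sum1_card card_ord.
apply: eq_bigr => x _; rewrite (bigD1 (g x)) //= eqxx big1 ?addn0 // => v /negbTE.
by rewrite eq_sym => ->.
Qed.

Definition Dset := [set v | #|fib v| == 2].
Definition Mset := [set v | #|fib v| == 0].

Lemma card_DM : #|Dset| = #|Mset|.
Proof.
have E : \sum_v (#|fib v| + (#|fib v| == 0 : nat)) = \sum_v (1 + (#|fib v| == 2 : nat)).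
  apply: eq_bigr => v _; have := fib_le2 v.
  by case: #|fib v| => [|[|[|]]].
move: E; rewrite !big_split /= sum_fib sum1_card card_ord.
have C (P : pred 'I_n.+1) : \sum_(v : 'I_n.+1) (P v : nat) = #|[set v | P v]|.
  rewrite -sum1_card [RHS]big_mkcond /=; apply: eq_bigr => v _; rewrite inE; by case: (P v).
rewrite !C /Dset /Mset => /eqP; rewrite eqn_add2l => /eqP.
by move=> ->.
Qed.

Lemma core : ~ vsurj g ->
  exists x y, x != y /\ g x = g y /\ (val (g x) = 0 \/ val (g x) = n).
Proof.
move=> ns; apply: NNPP => Hno.
have Dend a : a \in Dset -> 0 < nat_of_ord a < n.
  rewrite inE => /eqP H2.
  have : 1 < #|fib a| by rewrite H2.
  case/card_gt1P => x [y [hx hy nxy]]; move: hx hy; rewrite !inE => /eqP hx /eqP hy.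
  have := ltn_ord a; case: (nat_of_ord a =P 0) => [E|N0].
    by case: Hno; exists x, y; rewrite hx hy; split => //; split => //; left; exact: E.
  case: (nat_of_ord a =P n) => [E|Nn]; last (move=> Ha; lia).
  by case: Hno; exists x, y; rewrite hx hy; split => //; split => //; right; exact: E.
have [w Mw] : exists w, w \in Mset.
  apply: NNPP => H; apply: ns => w.
  have : 0 < #|fib w|.
    by rewrite lt0n; apply/negP => E; apply: H; exists w; rewrite inE.
  by case/card_gt0P => x; rewrite inE => /eqP; exists x.
have := @arg_minnP _ w [pred i | i \in Mset] (fun i => nat_of_ord i) Mw.
case=> m Mm minm.
pose f := fun v : 'I_n.+1 => (inord v.+1 : 'I_n.+1).
have fval v : v \in Dset -> nat_of_ord (f v) = v.+1.
  by move=> /Dend Hv; rewrite /f inordK //; lia.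
have inj : {in Dset &, injective f}.
  move=> u v Hu Hv E; apply: val_inj; have := congr1 (@nat_of_ord _) E; rewrite !fval //; by case.
have D2 a : a \in Dset -> #|fib a| = 2 by rewrite inE => /eqP.
have sub : f @: Dset \subset Mset :\ m.
  apply/subsetP => _ /imsetP [a Da ->]; rewrite !inE; apply/andP; split.
  - apply/negP => /eqP Em.
    have Ha := Dend a Da.
    pose b := (inord a.-1 : 'I_n.+1).
    have vb : nat_of_ord b = a.-1 by rewrite /b inordK //; lia.
    have Mb : b \in Mset.
      rewrite inE; apply/eqP; apply: (@fib_nbr a b (D2 a Da)).
        by apply: eadj; right; rewrite vb; lia.
      by apply/eqP => Eab; have := congr1 (@nat_of_ord _) Eab; rewrite vb; lia.
    have := minm b Mb; rewrite /= vb -Em fval //; lia.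
  - have Ha := Dend a Da.
    apply/eqP; apply: (@fib_nbr a (f a) (D2 a Da)).
      by apply: eadj; left; rewrite fval //; lia.
    by apply/eqP => Eab; have := congr1 (@nat_of_ord _) Eab; rewrite fval //; lia.
have Mm2 : m \in Mset by exact: Mm.
have := subset_leq_card sub; rewrite (card_in_imset inj) card_DM (cardsD1 m Mset) Mm2.
lia.
Qed.
End Core.

Lemma tri_nat (k x y z : nat) : 4 <= k -> x < k -> y < k -> z < k ->
  x <> y -> y <> z -> x <> z ->
  (x.+1 %% k = y \/ y.+1 %% k = x) -> (y.+1 %% k = z \/ z.+1 %% k = y) ->
  (x.+1 %% k = z \/ z.+1 %% k = x) -> False.
Proof.
move=> k4 xk yk zk.
have M a : a < k -> a.+1 %% k = if a.+1 == k then 0 else a.+1.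
  move=> ak; case: eqP => [->|ne]; first by rewrite modnn.
  by rewrite modn_small //; lia.
rewrite (M x xk) (M y yk) (M z zk).
case: (x.+1 =P k); case: (y.+1 =P k); case: (z.+1 =P k); lia.
Qed.

Lemma cyc_ok n : 3 <= n ->
  [/\ forall x y, @cycle_adj n.+1 x y = @cycle_adj n.+1 y x,
      forall x y z : 'I_n.+1, x != y -> y != z -> x != z -> @cycle_adj n.+1 x y ->
         @cycle_adj n.+1 y z -> @cycle_adj n.+1 x z -> False &
      forall a b : 'I_n.+1, (nat_of_ord b = nat_of_ord a + 1 \/ nat_of_ord a = nat_of_ord b + 1) -> @cycle_adj n.+1 a b].
Proof.
move=> n3; split.
- by move=> x y; rewrite /cycle_adj orbC.
- move=> x y z nxy nyz nxz; rewrite /cycle_adj.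
  move=> /orP [/eqP H1|/eqP H1] /orP [/eqP H2|/eqP H2] /orP [/eqP H3|/eqP H3];
  apply: (@tri_nat n.+1 x y z) => //;
  try (by move/val_inj => E; move: nxy nyz nxz; rewrite E eqxx);
  try (by left); try (by right).
- move=> a b [H|H]; rewrite /cycle_adj; apply/orP; [left|right];
  rewrite modn_small ?H ?addn1 //; have := ltn_ord a; have := ltn_ord b; lia.
Qed.

Lemma path_ok n :
  [/\ forall x y, @path_adj n.+1 x y = @path_adj n.+1 y x,
      forall x y z : 'I_n.+1, x != y -> y != z -> x != z -> @path_adj n.+1 x y ->
         @path_adj n.+1 y z -> @path_adj n.+1 x z -> False &
      forall a b : 'I_n.+1, (nat_of_ord b = nat_of_ord a + 1 \/ nat_of_ord a = nat_of_ord b + 1) -> @path_adj n.+1 a b].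
Proof.
split.
- by move=> x y; rewrite /path_adj orbC.
- move=> x y z nxy nyz nxz; rewrite /path_adj.
  have ne : forall u v : 'I_n.+1, u != v -> nat_of_ord u <> nat_of_ord v.
    by move=> u v /eqP huv E; apply: huv; apply: val_inj.
  move: (ne _ _ nxy) (ne _ _ nyz) (ne _ _ nxz) => a b c.
  move=> /orP [/eqP H1|/eqP H1] /orP [/eqP H2|/eqP H2] /orP [/eqP H3|/eqP H3]; lia.
- move=> a b [H|H]; rewrite /path_adj; apply/orP; [left|right]; rewrite H addn1 //.
Qed.

Theorem lemma12 :
  (forall (k : nat), 4 <= k -> ~~ odd k ->
     forall g : 'I_k -> 'I_k,
       is_hom (compl_graph (@cycle_adj k)) (compl_graph (@cycle_adj k)) g ->
       ~ vsurj g ->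
       exists x y : 'I_k, x != y /\ g x = g y /\
         (val (g x) = 0 \/ val (g x) = k.-1))
  /\
  (forall (k : nat), 4 <= k ->
     forall g : 'I_k -> 'I_k,
       is_hom (compl_graph (@path_adj k)) (compl_graph (@path_adj k)) g ->
       ~ vsurj g ->
       exists x y : 'I_k, x != y /\ g x = g y /\
         (val (g x) = 0 \/ val (g x) = k.-1)).
Proof.
split.
- case=> // n k4 _ g hom ns.
  have [h1 h2 h3] := @cyc_ok n k4.
  have := @core n _ h1 h2 h3 g hom ns; case=> x [y [p1 [p2 p3]]]; exists x, y; split=> //; split=> //.
- case=> // n k4 g hom ns.
  have [h1 h2 h3] := path_ok n.
  have := @core n _ h1 h2 h3 g hom ns; case=> x [y [p1 [p2 p3]]]; exists x, y; split=> //; split=> //.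
Qed.
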